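(* Let $a,b,d\in\mathbb C$ with $a\notin\mathbb Z$ and $d\notin\{0,-1,-2,\dots\}$. Then, as an identity of formal power series in $x,y$, $${}_1F_1(a;d;x)\,{}_1F_1(b;1-a;y)=\mathrm H_4(a,b;d;x,-y)+\sum_{k=1}^\infty\sum_{l=1}^k\frac{(-1)^{k-l}(k-1)!}{(l-1)!\,l!\,(k-l)!}\,\frac{(b)_k}{(1-a)_k(1-a)_{k-l}(d)_l}\,x^ly^k\,\mathrm H_4(a-k+l,b+k;d+l;x,-y).$$
   Context: Pochhammer symbol: $(\lambda)_k=\Gamma(\lambda+k)/\Gamma(\lambda)$ for every integer $k$ (possibly negative) whenever defined; $(\lambda)_0=1$. ${}_1F_1(a;c;x)=\sum_{k\ge0}\frac{(a)_k}{(c)_k k!}x^k$. Confluent Horn function $\mathrm H_4(a,b;d;x,y)=\sum_{p,q\ge0}\frac{(a)_{p-q}(b)_q}{(d)_p\,p!\,q!}x^py^q$. All functions are regarded as formal power series in $x,y$; the infinite double sum converges in the formal (degree) topology. *)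

(* Defs.v *)
(* Formal power series in x,y over a field R are represented
   by their coefficient functions: f p q = coefficient of x^p y^q. *)
From HB Require Import structures.
From mathcomp Require Import all_boot all_order all_algebra.
Set Implicit Arguments. Unset Strict Implicit. Unset Printing Implicit Defensive.
Import Order.TTheory GRing.Theory Num.Theory.
Local Open Scope ring_scope.

Section Defs.
Variable R : fieldType.

(* Pochhammer symbol (x)_k for an integer k:
   k = n >= 0 : x (x+1) ... (x+n-1);
   k = -(n+1) : 1 / ((x-1)(x-2)...(x-(n+1)))  ( = Gamma(x+k)/Gamma(x) ). *)
Definition poch (x : R) (k : int) : R :=
  match k with
  | Posz n => \prod_(i < n) (x + i%:R)
  | Negz n => (\prod_(i < n.+1) (x - (i.+1)%:R))^-1
  end.

Definition pochn (x : R) (n : nat) : R := poch x n%:Z.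

Definition fps2 := nat -> nat -> R.

Definition fps2_mul (f g : fps2) : fps2 := fun p q =>
  \sum_(i < p.+1) \sum_(j < q.+1) f i j * g (p - i)%N (q - j)%N.

Definition xser (f : nat -> R) : fps2 := fun p q => if q == 0%N then f p else 0.
Definition yser (f : nat -> R) : fps2 := fun p q => if p == 0%N then f q else 0.

Definition negy (f : fps2) : fps2 := fun p q => (-1) ^+ q * f p q.

Definition mono (l k : nat) : fps2 := fun p q => if (p == l) && (q == k) then 1 else 0.

(* F k sums to S in the formal (coefficientwise, discrete) topology *)
Definition fps2_hasSum (F : nat -> fps2) (S : fps2) : Prop :=
  forall p q, exists N, forall n, (N <= n)%N -> \sum_(k < n) F k p q = S p q.

Definition F11 (a c : R) : nat -> R := fun k =>
  pochn a k / (pochn c k * (k`!)%:R).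

Definition H4 (a b d : R) : fps2 := fun p q =>
  poch a (p%:Z - q%:Z) * pochn b q / (pochn d p * (p`!)%:R * (q`!)%:R).

Definition ccoef (a b d : R) (k l : nat) : R :=
  (-1) ^+ (k - l) * ((k.-1)`!)%:R / (((l.-1)`!)%:R * (l`!)%:R * ((k - l)`!)%:R)
  * (pochn b k / (pochn (1 - a) k * pochn (1 - a) (k - l) * pochn d l)).

Definition rhs_term (a b d : R) (k : nat) : fps2 :=
  if k is 0 then negy (H4 a b d)
  else fun p q => \sum_(1 <= l < k.+1)
         ccoef a b d k l *
         fps2_mul (mono l k)
           (negy (H4 (a - k%:R + l%:R) (b + k%:R) (d + l%:R))) p q.

End Defs.

(* Main.v *)
Require Import Defs.
From HB Require Import structures.
From mathcomp Require Import all_boot all_order all_algebra.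
From mathcomp Require Import zify ring lra.
Import Order.TTheory GRing.Theory Num.Theory.
Local Open Scope ring_scope.
Set Implicit Arguments. Unset Strict Implicit.
Section S.
Variable C : numClosedFieldType.
Implicit Types (x y : C).

Lemma pochS x n : pochn x n.+1 = pochn x n * (x + n%:R).
Proof. by rewrite /pochn /= big_ord_recr. Qed.

Lemma poch0 x : poch x 0 = 1.
Proof. exact: big_ord0. Qed.
Lemma pochn0 x : pochn x 0 = 1.
Proof. exact: poch0. Qed.

Lemma pochnD x m n : pochn x (m + n) = pochn x m * pochn (x + m%:R) n.
Proof.
elim: n => [|n IH]; first by rewrite addn0 pochn0 mulr1.
by rewrite addnS !pochS IH natrD addrA mulrA.
Qed.

Definition nonint x := forall w : int, x + w%:~R != 0.

Lemma poch_shift x z : nonint x -> poch x (z + 1) = poch x z * (x + z%:~R).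
Proof.
move=> hx; case: z => n.
  have -> : (Posz n + 1 = Posz n.+1)%R by rewrite -addn1 PoszD.
  by rewrite /poch big_ord_recr.
case: n => [|m].
  have -> : (Negz 0 + 1 = 0)%R by [].
  rewrite poch0 /poch big_ord1 /= (_ : (Negz 0)%:~R = -1 :> C) //.
  by rewrite mulVf // (hx (Negz 0)).
have -> : (Negz m.+1 + 1 = Negz m)%R by rewrite !NegzE; lia.
rewrite /poch (big_ord_recr m.+1) /= invfM -mulrA.
have -> : (Negz m.+1)%:~R = - (m.+2)%:R :> C by rewrite NegzE mulrNz.
rewrite mulVf ?mulr1 //.
have := hx (Negz m.+1); by rewrite NegzE mulrNz.
Qed.

Lemma int_uniq (h1 h2 c : int -> C) : (forall z, c z != 0) -> h1 0 = h2 0 ->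
  (forall z, h1 (z+1) = h1 z * c z) -> (forall z, h2 (z+1) = h2 z * c z) ->
  forall z, h1 z = h2 z.
Proof.
move=> hc h0 s1 s2; case=> n.
  elim: n => [//|n IH].
  have -> : Posz n.+1 = (Posz n + 1)%R by rewrite -addn1 PoszD.
  by rewrite s1 s2 IH.
elim: n => [|n IH].
  apply: (mulIf (hc (Negz 0))); rewrite -s1 -s2.
  by have -> : (Negz 0 + 1 = 0)%R by [].
apply: (mulIf (hc (Negz n.+1))); rewrite -s1 -s2.
by have -> : (Negz n.+1 + 1 = Negz n)%R by rewrite !NegzE; lia.
Qed.

Lemma int_neq0 (h c : int -> C) : (forall z, c z != 0) -> h 0 != 0 ->
  (forall z, h (z+1) = h z * c z) -> forall z, h z != 0.
Proof.
move=> hc h0 s; case=> n.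
  elim: n => [//|n IH].
  have -> : Posz n.+1 = (Posz n + 1)%R by rewrite -addn1 PoszD.
  by rewrite s mulf_neq0.
elim: n => [|n IH].
  have := h0; have -> : (0 = Negz 0 + 1)%R by [].
  by rewrite s mulf_eq0 negb_or => /andP[].
move: IH; have -> : (Negz n = Negz n.+1 + 1)%R by rewrite !NegzE; lia.
by rewrite s mulf_eq0 negb_or => /andP[].
Qed.

Lemma poch_neq0 x z : nonint x -> poch x z != 0.
Proof.
move=> hx; apply: (int_neq0 (c := fun z => x + z%:~R)) => //.
  by rewrite poch0 oner_neq0.
by move=> w; apply: poch_shift.
Qed.

Lemma pochn_neq0 x n : (forall i : nat, x + i%:R != 0) -> pochn x n != 0.
Proof.
move=> h; elim: n => [|n IH]; first by rewrite pochn0 oner_neq0.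
by rewrite pochS mulf_neq0.
Qed.

Lemma pochSl x n : pochn x n.+1 = x * pochn (x + 1) n.
Proof. by rewrite -add1n pochnD /pochn /= big_ord1 /= addr0. Qed.

Lemma poch_refl y n : pochn (- y - n%:R + 1) n = (-1) ^+ n * pochn y n.
Proof.
elim: n y => [|n IH] y; first by rewrite !pochn0 mulr1.
rewrite pochSl.
have -> : - y - n.+1%:R + 1 + 1 = - y - n%:R + 1 by rewrite -addn1 natrD; ring.
by rewrite IH pochS exprS -addn1 natrD; ring.
Qed.

Lemma pochnZ x z n : nonint x -> poch x (z + n%:Z) = poch x z * pochn (x + z%:~R) n.
Proof.
move=> hx; elim: n => [|n IH]; first by rewrite addr0 pochn0 mulr1.
have -> : (z + n.+1%:Z = (z + n%:Z) + 1)%R by rewrite -addn1 PoszD addrA.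
rewrite poch_shift // IH pochS -mulrA; congr (_ * (_ * _)).
by rewrite intrD addrA.
Qed.


Lemma nonintB x j : nonint x -> nonint (x - j%:R).
Proof.
move=> h w; have := h (w - j%:Z)%R.
by rewrite intrD intrN /= -addrA (addrC (- _)).
Qed.

Lemma poch_refl_int a j z : nonint a ->
  poch (a - j%:R) (z + j%:Z) = (-1) ^+ j * pochn (1 - a) j * poch a z.
Proof.
move=> ha.
pose h1 := fun z => poch (a - j%:R) (z + j%:Z).
pose h2 := fun z => (-1) ^+ j * pochn (1 - a) j * poch a z.
apply: (int_uniq (h1 := h1) (h2 := h2) (c := fun z => a + z%:~R)) => //.
- rewrite /h1 /h2 add0r poch0 mulr1.
  have -> : a - j%:R = - (1 - a) - j%:R + 1 by ring.
  exact: poch_refl.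
- move=> w; rewrite /h1.
  have -> : (w + 1 + j%:Z = (w + j%:Z) + 1)%R by rewrite addrAC.
  rewrite poch_shift; last exact: nonintB.
  by congr (_ * _); rewrite intrD; ring.
- by move=> w; rewrite /h2 poch_shift // mulrA.
Qed.

Lemma vandr x y n :
  \sum_(k < n.+1) 'C(n, k)%:R * pochn x k * pochn y (n - k) = pochn (x + y) n.
Proof.
elim: n => [|n IH].
  by rewrite big_ord_recl big_ord0 /= !pochn0 addr0 !mulr1.
rewrite pochS -IH mulr_suml.
rewrite big_ord_recl /= bin0 subn0.
under eq_bigr do rewrite binS natrD mulrDl mulrDl subSS.
rewrite big_split /=.
have E : forall k : 'I_n.+1, 'C(n, k)%:R * pochn x k * pochn y (n - k) * (x + y + n%:R)
   = 'C(n, k)%:R * pochn x k.+1 * pochn y (n - k)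
     + 'C(n, k)%:R * pochn x k * pochn y (n - k).+1.
  move=> k; rewrite !pochS.
  have hk : (k <= n)%N by rewrite -ltnS.
  rewrite natrB //; ring.
rewrite (eq_bigr _ (fun k _ => E k)) big_split /= addrA addrC; congr (_ + _).
rewrite [in RHS]big_ord_recl /= bin0 subn0 [in LHS]big_ord_recr /= bin_small // mul0r mul0r addr0.
rewrite pochn0 !mul1r; congr (_ + _).
apply: eq_bigr => k _; rewrite /bump /= add1n subnSK //.
Qed.

Lemma sum_delta (F : nat -> C) l n :
  \sum_(i < n.+1) (if (i : nat) == l then F i else 0) = if (l <= n)%N then F l else 0.
Proof.
case: leqP => h.
  rewrite (bigD1 (Ordinal (h : (l < n.+1)%N))) //= eqxx big1 ?addr0 // => i ne.
  rewrite ifN //; apply: contra ne => /eqP e; apply/eqP/val_inj; exact: e.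
rewrite big1 // => i _; rewrite ifN //; apply/eqP => e.
by have := ltn_ord i; rewrite e ltnS leqNgt h.
Qed.

Lemma mulmono l k (G : fps2 C) p q :
  fps2_mul (mono C l k) G p q = if (l <= p)%N && (k <= q)%N then G (p - l)%N (q - k)%N else 0.
Proof.
rewrite /fps2_mul (eq_bigr (fun i : 'I_p.+1 => if (i : nat) == l then
   \sum_(j < q.+1) (if (j : nat) == k then G (p - i)%N (q - j)%N else 0) else 0)).
  rewrite (sum_delta (fun i => \sum_(j < q.+1) (if (j : nat) == k then G (p - i)%N (q - j)%N else 0))).
  rewrite (sum_delta (fun j => G (p - l)%N (q - j)%N)).
  by case: (l <= p)%N; case: (k <= q)%N.
move=> i _; rewrite /mono; case: eqP => _ /=.
  by apply: eq_bigr => j _; case: eqP => _ /=; rewrite ?mul1r ?mul0r.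
by rewrite big1 // => j _; rewrite mul0r.
Qed.

Lemma mulxy (f g : nat -> C) p q :
  fps2_mul (xser f) (yser g) p q = f p * g q.
Proof.
rewrite /fps2_mul (eq_bigr (fun i : 'I_p.+1 => if (i : nat) == p then f p * g q else 0)).
  by rewrite (sum_delta (fun _ => f p * g q)) leqnn.
move=> i _.
rewrite (eq_bigr (fun j : 'I_q.+1 => if (j : nat) == 0%N then f i * yser g (p - i)%N q else 0)).
  rewrite (sum_delta (fun _ => f i * yser g (p - i)%N q)) /= /yser.
  case: (@eqP _ (i : nat) p) => [->|ne]; first by rewrite subnn eqxx.
  have hi : (i <= p)%N by rewrite -ltnS.
  rewrite ifN ?mulr0 //; lia.
move=> j _; rewrite /xser; case: eqP => [->|_]; last by rewrite mul0r.
by rewrite subn0.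
Qed.


Lemma factr_neq0 n : (n`!)%:R != 0 :> C.
Proof. by rewrite pnatr_eq0 -lt0n fact_gt0. Qed.

Lemma binr n m : (m <= n)%N -> 'C(n, m)%:R = n`!%:R / (m`!%:R * (n - m)`!%:R) :> C.
Proof.
move=> h; rewrite -(bin_fact h) !natrM mulfK //.
by rewrite mulf_neq0 // factr_neq0.
Qed.

Definition cb (p k : nat) : nat := if p is p'.+1 then 'C(p' + k, k) else (k == 0%N).

Lemma lsum p k : (0 < k)%N -> \sum_(1 <= l < k.+1) 'C(k.-1, l.-1) * 'C(p, l) = cb p k.
Proof.
move=> hk; have V := binomial.Vandermonde p k.-1 k.
have V0 : 'C(k.-1, k) = 0%N by case: k hk {V} => // k _; rewrite bin_small.
rewrite big_ord_recl /= subn0 V0 muln0 add0n in V.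
rewrite big_add1 /= big_mkord.
have -> : cb p k = 'C(p + k.-1, k).
  case: p {V V0} => [|p] /=; first by rewrite bin_small //; case: k hk.
  by congr 'C(_, _); lia.
rewrite -V; apply: eq_bigr => i _; rewrite /bump /= add1n mulnC; congr (_ * _).
have hi : (i <= k.-1)%N by have := ltn_ord i; lia.
by rewrite -[LHS](bin_sub hi); congr 'C(_, _); lia.
Qed.

Lemma pochn_nat p k : pochn (p%:R : C) k = (cb p k * k`!)%:R.
Proof.
case: p => [|p].
  case: k => [|k]; first by rewrite pochn0.
  by rewrite pochSl mul0r /= mul0n.
elim: k => [|k IH]; first by rewrite pochn0 /= bin0.
rewrite pochS IH /= -natrD -natrM; congr (_%:R).
have H := mul_bin_diag (p + k.+1) k; rewrite addnS /= in H.
rewrite factS addSn.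
rewrite addnS; have -> : ('C(p + k, k) * k`! * (p + k).+1 = k`! * ((p + k).+1 * 'C(p + k, k)))%N by ring.
by rewrite H; ring.
Qed.

Variables (a b d : C).
Hypothesis ha : nonint a.
Hypothesis hd : forall n : nat, d + n%:R != 0.
Hypothesis ha1 : forall n : nat, 1 - a + n%:R != 0.

Lemma pd_neq0 l n : pochn (d + l%:R) n != 0.
Proof. by apply: pochn_neq0 => i; rewrite -addrA -natrD. Qed.
Lemma pa_neq0 l n : pochn (1 - a + l%:R) n != 0.
Proof. by apply: pochn_neq0 => i; rewrite -addrA -natrD. Qed.
Lemma pd0_neq0 n : pochn d n != 0.
Proof. by apply: pochn_neq0. Qed.
Lemma pa0_neq0 n : pochn (1 - a) n != 0.
Proof. by apply: pochn_neq0. Qed.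

Lemma term_kl p q k l : (1 <= l)%N -> (l <= k)%N -> (k <= q)%N ->
  ccoef a b d k l * fps2_mul (mono C l k)
     (negy (H4 (a - k%:R + l%:R) (b + k%:R) (d + l%:R))) p q
  = ('C(k.-1, l.-1) * 'C(p, l))%:R * (pochn b q / pochn d p * poch a (p%:Z - q%:Z)
       / p`!%:R * ((-1) ^+ (q - k) / (pochn (1 - a) k * (q - k)`!%:R))).
Proof.
move=> h1l hlk hkq; rewrite mulmono hkq andbT.
case: leqP => hlp; last by rewrite mulr0 (bin_small hlp) muln0 mul0r.
rewrite /negy /H4 /ccoef.
have Ea : a - k%:R + l%:R = a - (k - l)%:R by rewrite natrB //; ring.
have Ez : ((p - l)%:Z - (q - k)%:Z = (p%:Z - q%:Z) + (k - l)%:Z)%R by lia.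
rewrite Ea Ez poch_refl_int //.
have Eb : pochn b q = pochn b k * pochn (b + k%:R) (q - k) by rewrite -pochnD subnKC.
have Ed : pochn d p = pochn d l * pochn (d + l%:R) (p - l) by rewrite -pochnD subnKC.
rewrite Eb Ed natrM (binr hlp) binr; last by lia.
have -> : (k.-1 - l.-1 = k - l)%N by lia.
set s := (-1) ^+ (k - l).
have sE : s = s^-1 by rewrite /s -exprVn invrN1.
rewrite {1}sE.
have s0 : s != 0 by rewrite /s signr_eq0.
have := pd_neq0 l (p - l); have := pd0_neq0 l; have := pa0_neq0 k;
have := pa0_neq0 (k - l); have := factr_neq0.
move=> f0 n1 n2 n3 n4.
by field; rewrite !f0 n1 n2 n3 n4 s0.
Qed.

Lemma term_k p q k : (k <= q)%N ->
  rhs_term a b d k p q = (cb p k)%:R * (pochn b q / pochn d p * poch a (p%:Z - q%:Z)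
       / p`!%:R * ((-1) ^+ (q - k) / (pochn (1 - a) k * (q - k)`!%:R))).
Proof.
case: k => [|k] hkq.
  rewrite /= /negy /H4 pochn0 subn0.
  have -> : cb p 0 = 1%N by case: p => //= p; rewrite bin0.
  have := pd0_neq0 p; have := factr_neq0; move=> f0 n1.
  by field; rewrite !f0 n1.
rewrite /rhs_term -(lsum p (ltn0Sn k)) natr_sum mulr_suml.
apply: eq_big_nat => l /andP[h1 h2].
by rewrite term_kl.
Qed.

Lemma conv p q k : (k <= q)%N ->
  (cb p k)%:R * (pochn b q / pochn d p * poch a (p%:Z - q%:Z)
       / p`!%:R * ((-1) ^+ (q - k) / (pochn (1 - a) k * (q - k)`!%:R)))
  = pochn b q / pochn d p * poch a (p%:Z - q%:Z) / (p`!%:R * pochn (1 - a) q * q`!%:R)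
    * ('C(q, k)%:R * pochn (p%:R) k * pochn (a - q%:R) (q - k)).
Proof.
move=> hkq.
rewrite pochn_nat natrM (binr hkq).
have Ea : pochn (1 - a) q = pochn (1 - a) k * pochn (1 - a + k%:R) (q - k)
  by rewrite -pochnD subnKC.
have Eq : a - q%:R = - (1 - a + k%:R) - (q - k)%:R + 1 by rewrite natrB //; ring.
rewrite Ea Eq poch_refl.
have := pd0_neq0 p; have := factr_neq0; have := pa0_neq0 k; have := pa_neq0 k (q - k).
move=> n1 n2 f0 n3.
by field; rewrite !f0 n1 n2 n3.
Qed.

End S.

Unset Implicit Arguments. Set Strict Implicit.
Theorem mainTheorem9 (C : numClosedFieldType) (a b d : C)
    (ha : forall z : int, a != z%:~R)
    (hd : forall n : nat, d != - n%:R) :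
  fps2_hasSum (rhs_term a b d)
    (fps2_mul (xser (F11 a d)) (yser (F11 b (1 - a)))).
Proof.
have na : nonint a.
  by move=> w; rewrite addr_eq0 -mulrNz; apply: ha.
have hd' : forall n : nat, d + n%:R != 0 by move=> n; rewrite addr_eq0.
have ha1 : forall n : nat, 1 - a + n%:R != 0.
  move=> n; have := ha (n.+1)%:Z; apply: contra => /eqP h; apply/eqP.
  rewrite -pmulrn -addn1 natrD; apply/eqP; rewrite -subr_eq0; apply/eqP.
  rewrite (_ : a - _ = - (1 - a + n%:R)); [by rewrite h oppr0 | ring].
move=> p q; exists q.+1 => n hn.
have trunc : forall k, (q < k)%N -> rhs_term a b d k p q = 0.
  case=> [//|k] hk /=; rewrite big1 // => l _.
  by rewrite mulmono (leqNgt k.+1 q) hk andbF mulr0.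
rewrite -(subnKC hn) big_split_ord /= [X in _ + X]big1 ?addr0; last first.
  by move=> i _; apply: (trunc (q.+1 + i)); lia.
rewrite (eq_bigr (fun k : 'I_q.+1 =>
   pochn b q / pochn d p * poch a (p%:Z - q%:Z) / (p`!%:R * pochn (1 - a) q * q`!%:R)
    * ('C(q, k)%:R * pochn (p%:R) k * pochn (a - q%:R) (q - k)))); last first.
  move=> k _; have hk : (k <= q)%N by rewrite -ltnS.
  by rewrite /= (term_k b na hd' ha1) // (conv b hd' ha1).
rewrite -mulr_sumr vandr mulxy /F11.
have Ep : pochn a p = poch a (p%:Z - q%:Z) * pochn (a + (p%:Z - q%:Z)%:~R) q.
  by rewrite -pochnZ // subrK.
have -> : p%:R + (a - q%:R) = a + (p%:Z - q%:Z)%:~R :> C.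
  by rewrite intrB /=; ring.
rewrite Ep.
have := pd0_neq0 hd' p; have := factr_neq0 C; have := pa0_neq0 ha1 q.
move=> n1 f0 n2.
by field; rewrite !f0 n1 n2.
Qed.
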